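(* Let $A\subseteq\mathcal{T}_n\setminus\mathcal{S}_n$. The following are equivalent: (1) $A$ is independent; (2) for all distinct $a,b\in A$ there is no $g\in\mathcal{S}_n$ such that $\ker(a)g\subseteq\ker(b)$.
   Context: $\Omega=\{1,\ldots,n\}$, $\mathcal{T}_n$ is the monoid of all maps $\Omega\to\Omega$, $\mathcal{S}_n$ the symmetric group. A set $A\subseteq\mathcal{T}_n\setminus\mathcal{S}_n$ is independent if for all distinct $a,b\in A$ we have $a\notin\langle b,\mathcal{S}_n\rangle$. $\ker(a)=\{(x,y)\in\Omega\times\Omega: xa=ya\}$, and for $g\in\mathcal{S}_n$, $\ker(a)g=\{(xg,yg):(x,y)\in\ker(a)\}$; inclusion is inclusion of relations. *)

(* Defs.v *)
From mathcomp Require Import all_boot all_fingroup.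
Set Implicit Arguments. Unset Strict Implicit. Unset Printing Implicit Defensive.

(* T_n = maps Omega -> Omega with Omega = 'I_n; maps act on the right: x a. *)
Definition tmap (n : nat) := {ffun 'I_n -> 'I_n}.

(* product in T_n with right actions: x (a b) = (x a) b *)
Definition tmul n (a b : tmap n) : tmap n := [ffun x => b (a x)].
Definition tid n : tmap n := [ffun x => x].

Definition in_Sn n (a : tmap n) : bool := injectiveb a.

Inductive in_gen n (X : tmap n -> Prop) : tmap n -> Prop :=
| gen_id : in_gen X (tid n)
| gen_mul (a x : tmap n) : in_gen X a -> X x -> in_gen X (tmul a x).

Definition in_gen_Sn n (b a : tmap n) : Prop :=
  in_gen (fun x => x = b \/ in_Sn x) a.

Definition independent n (A : {set tmap n}) : Prop :=
  forall a b, a \in A -> b \in A -> a != b -> ~ in_gen_Sn b a.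

Definition tker n (a : tmap n) : {set 'I_n * 'I_n} :=
  [set p | a p.1 == a p.2].

Definition ker_perm n (a : tmap n) (g : {perm 'I_n}) : {set 'I_n * 'I_n} :=
  [set (g p.1, g p.2) | p in tker a].

(* Main.v *)
Require Import Defs.
From mathcomp Require Import all_boot all_fingroup.
From mathcomp Require Import zify.
Set Implicit Arguments. Unset Strict Implicit. Unset Printing Implicit Defensive.

Lemma in_gen_comp n (X : tmap n -> Prop) c d :
  in_gen X c -> in_gen X d -> in_gen X (tmul c d).
Proof.
move=> Hc; elim=> [|d' x _ IH Hx].
  by have -> : tmul c (tid n) = c by apply/ffunP=> i; rewrite !ffunE.
have -> : tmul c (tmul d' x) = tmul (tmul c d') x by apply/ffunP=> i; rewrite !ffunE.
exact: gen_mul.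
Qed.

Lemma perm_ext n (f : 'I_n -> 'I_n) (s : seq 'I_n) :
  {in s &, injective f} -> exists p : {perm 'I_n}, {in s, forall x, p x = f x}.
Proof.
elim: s => [|x s IH] inj; first by exists 1%g.
have inj' : {in s &, injective f}.
  by move=> y z ys zs; apply: inj; rewrite inE ?ys ?zs orbT.
have [p Hp] := IH inj'.
exists (p * tperm (p x) (f x))%g => y; rewrite inE permM.
case: (eqVneq y x) => [-> _| yx /= ys]; first by rewrite tpermL.
rewrite (Hp y ys) tpermD //.
  apply/eqP => E; move: yx; rewrite -(inj_eq (@perm_inj _ p)) Hp // E eqxx //.
apply/eqP => E; move: yx; rewrite (inj y x) ?eqxx ?inE ?eqxx ?ys ?orbT //.
Qed.

Definition img n (a : tmap n) := [set a x | x : 'I_n].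

Lemma perm_in_gen n (a : tmap n) (p : {perm 'I_n}) :
  in_gen_Sn a [ffun x => p x].
Proof.
have -> : [ffun x => p x] = tmul (tid n) [ffun x => p x].
  by apply/ffunP=> i; rewrite !ffunE.
apply: gen_mul; first exact: gen_id.
right; apply/injectiveP => x y; rewrite !ffunE; exact: perm_inj.
Qed.

Lemma base n (a h : tmap n) :
  {in img a &, injective h} -> in_gen_Sn a (tmul a h).
Proof.
move=> inj.
have [p Hp] := @perm_ext n h (enum (img a)) (fun x y xs ys => inj x y
   (etrans (esym (mem_enum _ _)) xs) (etrans (esym (mem_enum _ _)) ys)).
have -> : tmul a h = tmul (tmul (tid n) a) [ffun x => p x].
  apply/ffunP=> i; rewrite !ffunE Hp // mem_enum; exact: imset_f.
apply: gen_mul; first by apply: gen_mul; [exact: gen_id | left].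
right; apply/injectiveP => x y; rewrite !ffunE; exact: perm_inj.
Qed.

Lemma core n (a : tmap n) u v : u != v -> a u = a v ->
  forall h, in_gen_Sn a (tmul a h).
Proof.
move=> uv auv.
suff H : forall k (h : tmap n), #|img a| - #|h @: img a| <= k -> in_gen_Sn a (tmul a h).
  by move=> h; exact: (H _ h (leqnn _)).
have auI : a u \in img a by apply: imset_f.
elim=> [|k IH] h hk.
  apply: base; apply/imset_injP; rewrite eqn_leq leq_imset_card /=.
  by rewrite leqn0 subn_eq0 in hk.
case: (boolP (#|h @: img a| == #|img a|)) => [/imset_injP|ne]; first exact: base.
have : [exists x in img a, exists y in img a, (x != y) && (h x == h y)].
  apply: contraR ne => H; apply/imset_injP => x y xI yI hxy; apply/eqP.
  apply: contraR H => xy; apply/existsP; exists x; rewrite xI; apply/existsP.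
  by exists y; rewrite yI xy hxy eqxx.
case/existsP => x /andP [xI /existsP [y /andP [yI /andP [xy /eqP hxy]]]].
have ltI : #|h @: img a| < #|img a| by rewrite ltn_neqAle ne leq_imset_card.
have [z zn] : exists z, z \notin h @: img a.
  case: (pickP (fun z => z \notin h @: img a)) => [z zn | H]; first by exists z.
  have : [set: 'I_n] \subset h @: img a.
    by apply/subsetP => w _; move: (H w) => /negbFE.
  move/subset_leq_card; rewrite cardsT card_ord => le1.
  have le2 : #|img a| <= n by rewrite -[X in _ <= X](card_ord n); apply: max_card.
  by have := leq_ltn_trans (leq_trans le2 le1) ltI; rewrite ltnn.
pose sigma i := if i == a u then u else odflt u [pick w | a w == i].
have sigmaK : forall i, i \in img a -> a (sigma i) = i.
  move=> i /imsetP [w _ ->]; rewrite /sigma; case: eqP => [-> //|_].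
  by case: pickP => [w' /eqP //| /(_ w)]; rewrite eqxx.
have sigmav : forall i, sigma i != v.
  move=> i; rewrite /sigma; case: ifP => [_|/negbT ne']; first exact: uv.
  case: pickP => [w' /eqP aw'|_ //]; apply/eqP => /= wv; move: ne'.
  by rewrite -aw' wv auv eqxx.
pose tau := tperm x (a u).
have tauI : forall i, i \in img a -> tau i \in img a.
  by move=> i iI; rewrite /tau; case: tpermP.
have [h1 Hh1] : exists h1 : tmap n,
    forall i, h1 i = if i == y then v else sigma (tau i).
  by exists [ffun i => if i == y then v else sigma (tau i)] => i; rewrite ffunE.
have [h2 Hh2] : exists h2 : tmap n,
    forall j, h2 j = if j == tau y then z else h (tau j).
  by exists [ffun j => if j == tau y then z else h (tau j)] => j; rewrite ffunE.
have tyu : (a u == tau y) = false.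
  apply/negbTE; rewrite -{1}(tpermL x (a u)) -/tau (inj_eq perm_inj).
  exact: xy.
have key : forall i, i \in img a -> h2 (a (h1 i)) = h i.
  move=> i iI; rewrite Hh1; case: (eqVneq i y) => [->|iy].
    by rewrite -auv Hh2 tyu /tau tpermR hxy.
  by rewrite sigmaK ?tauI // Hh2 (inj_eq perm_inj) (negbTE iy) tpermK.
have -> : tmul a h = tmul (tmul a h1) (tmul a h2).
  apply/ffunP => w; rewrite !ffunE key //; exact: imset_f.
apply: in_gen_comp; apply: IH.
  suff -> : #|h1 @: img a| = #|img a| by rewrite subnn.
  apply/eqP/imset_injP => i j iI jI; rewrite !Hh1.
  case: (eqVneq i y) => [->|iy]; case: (eqVneq j y) => [->|jy] //.
  - by move=> E; move: (sigmav (tau j)); rewrite -E eqxx.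
  - by move=> E; move: (sigmav (tau i)); rewrite E eqxx.
  move=> E; have := congr1 a E; rewrite !sigmaK ?tauI //.
  exact: perm_inj.
have -> : h2 @: img a = z |: (h @: img a).
  apply/setP => w; rewrite in_setU1; apply/imsetP/orP.
    case=> j jI ->; rewrite Hh2; case: ifP => _; first by left.
    by right; apply: imset_f; apply: tauI.
  case=> [/eqP -> | /imsetP [i iI ->]].
    by exists (tau y); [apply: tauI | rewrite Hh2 eqxx].
  case: (eqVneq i y) => [-> | iy].
    exists (tau x); first exact: tauI.
    by rewrite Hh2 (inj_eq perm_inj) (negbTE xy) tpermK hxy.
  exists (tau i); first exact: tauI.
  by rewrite Hh2 (inj_eq perm_inj) (negbTE iy) tpermK.
rewrite cardsU1 zn; lia.
Qed.

Lemma uv_of n (a : tmap n) : ~~ in_Sn a -> exists u v, u != v /\ a u = a v.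
Proof.
move=> Ha.
case: (boolP [exists u, exists v, (u != v) && (a u == a v)]).
  by case/existsP => u /existsP [v /andP [uv /eqP e]]; exists u, v.
move=> H; move: Ha; rewrite /in_Sn; have -> // : injectiveb a.
apply/injectiveP => x y e; apply/eqP/negPn/negP => xy; move/negP: H; apply.
by apply/existsP; exists x; apply/existsP; exists y; rewrite xy e eqxx.
Qed.

Lemma gen_ker n (b c : tmap n) : in_gen_Sn b c ->
  in_Sn c \/ exists s : {perm 'I_n}, forall x y, b (s x) = b (s y) -> c x = c y.
Proof.
elim=> [|c' x _ IH Hx].
  by left; apply/injectiveP => i j; rewrite !ffunE.
case: IH => [Hc | [s Hs]].
  case: Hx => [-> | Hx].
    right; exists (perm (injectiveP _ Hc)) => i j; rewrite !permE !ffunE //.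
  left; apply/injectiveP => i j; rewrite !ffunE => E.
  by apply: (injectiveP _ Hc); apply: (injectiveP _ Hx).
right; exists s => i j E; rewrite !ffunE; congr (x _); exact: Hs.
Qed.

Theorem lemma8p3 (n : nat) (A : {set tmap n}) :
  (forall a, a \in A -> ~~ in_Sn a) ->
  (independent A <->
   (forall a b, a \in A -> b \in A -> a != b ->
      ~ exists g : {perm 'I_n}, ker_perm a g \subset tker b)).
Proof.
move=> HA; split.
  move=> Hind a b aA bA ab [g sub].
  apply: (Hind b a bA aA); first by rewrite eq_sym.
  have kerg : forall x y, a x = a y -> b (g x) = b (g y).
    move=> x y e; have : (g x, g y) \in tker b.
      apply: (subsetP sub); apply/imsetP; exists (x, y) => //.
      by rewrite inE /= e.
    by rewrite inE => /eqP.
  pose h : tmap n := [ffun i => b (g (odflt i [pick w | a w == i]))].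
  have Hh : tmul a h = [ffun w => b (g w)].
    apply/ffunP => w; rewrite !ffunE; case: pickP => [w' /eqP e /=|/(_ w)].
      exact: kerg.
    by rewrite eqxx.
  have [u [v [uv auv]]] := uv_of (HA a aA).
  have -> : b = tmul [ffun x => (g^-1)%g x] (tmul a h).
    by apply/ffunP => x; rewrite Hh !ffunE permKV.
  apply: in_gen_comp; first exact: perm_in_gen.
  exact: (core uv auv).
move=> H2 a b aA bA ab Hgen.
apply: (H2 b a bA aA); first by rewrite eq_sym.
case: (gen_ker Hgen) => [Hs | [s Hs]]; first by move: (HA a aA); rewrite Hs.
exists (s^-1)%g; apply/subsetP => q /imsetP [[p1 p2] /=]; rewrite inE /= => /eqP e ->.
by rewrite inE /=; apply/eqP; apply: Hs; rewrite !permKV.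
Qed.
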